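(* Let $n\in\mathbb{Z}^+$ with $n>0$. Then $$\binom{2n}{n} = \left((4^n+1)^{2n}\bmod (4^{n(n+1)}+1)\right)\bmod (4^n-1).$$
   Context: For integers, $u\bmod m$ denotes the least non-negative remainder of $u$ upon division by $m>0$. *)

(* Defs.v *)
From mathcomp Require Import all_boot.

(* Main.v *)
Require Import Defs.
From mathcomp Require Import all_boot.
From mathcomp Require Import zify.

Lemma sum_bin m : \sum_(0 <= i < m.+1) 'C(m,i) = 2^m.
Proof.
rewrite -[2]/(1+1) expnDn big_mkord; apply eq_bigr => i _.
by rewrite !exp1n !muln1.
Qed.

Lemma bin_lt2 m k : 0 < k < m -> ('C(m,k)).+2 <= 2^m.
Proof.
move=> /andP[h0 h1]; rewrite -sum_bin (@big_cat_nat _ _ _ k) //=; last by lia.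
rewrite (@big_ltn _ _ _ 0 k) // (@big_ltn _ _ _ k m.+1) //; last by lia.
rewrite big_nat_recr /=; last by lia.
rewrite bin0 binn; lia.
Qed.

Lemma bin_lt m k : 0 < m -> k <= m -> 'C(m,k) < 2^m.
Proof.
move=> hm hk; case: (ltnP 0 k) => h0; last first.
  have -> : k = 0 by lia.
  rewrite -sum_bin (@big_ltn _ _ _ 0 m.+1) // bin0 big_nat_recr //= binn; lia.
case: (ltnP k m) => h1; first by have := @bin_lt2 m k; rewrite h0 h1 /=; lia.
have -> : k = m by lia.
rewrite -sum_bin big_nat_recr //= (@big_ltn _ _ _ 0 m) // bin0; lia.
Qed.

Lemma sum_lt x n (c : nat -> nat) : (forall j, j < n -> c j < x) ->
  \sum_(0 <= j < n) c j * x ^ j < x ^ n.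
Proof.
elim: n => [|n IH] h; first by rewrite big_geq.
rewrite big_nat_recr //= expnS.
have := IH (fun j hj => h j (ltnW hj)); have := h n (ltnSn n).
set S := \sum_(_ <= _ < _) _; set y := x ^ n => h1 h2.
have : (c n).+1 * y <= x * y by rewrite leq_mul2r h1 orbT.
nia.
Qed.

Lemma sum_mod d x (c : nat -> nat) m : x %% d = 1 %% d ->
  \sum_(0 <= j < m) c j * x ^ j = \sum_(0 <= j < m) c j %[mod d].
Proof.
move=> hx; rewrite -modn_summ -[RHS]modn_summ; congr (_ %% _).
apply eq_bigr => j _.
rewrite -modnMmr -modnXm hx modnXm exp1n modnMmr muln1 //.
Qed.

Lemma main_gen (n x : nat) (hn : 0 < n) (hx : x = 2 ^ n.*2) :
  'C(n.*2, n) = ((x + 1) ^ (n.*2) %% (x ^ n.+1 + 1)) %% (x - 1).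
Proof.
set c := fun k => 'C(n.*2, k).
set P := \sum_(0 <= k < n.+1) c k * x ^ k.
set N := \sum_(0 <= j < n) c (j + n.+1) * x ^ j.
set A := \sum_(0 <= k < n) c k * x ^ k.
have hP : P = A + c n * x ^ n by rewrite /P big_nat_recr.
have E : (x + 1) ^ n.*2 = P + x ^ n.+1 * N.
  rewrite addnC expnDn.
  rewrite -(big_mkord xpredT (fun i => 'C(n.*2, i) * (1 ^ (n.*2 - i) * x ^ i))).
  rewrite (@big_cat_nat _ _ _ n.+1) //=; last by lia.
  rewrite -[n.+1 in X in _ + X]add0n big_addn.
  have -> : n.*2.+1 - n.+1 = n by lia.
  rewrite /P /N big_distrr /=; congr (_ + _); apply eq_bigr => i _.
    by rewrite exp1n mul1n.
  by rewrite exp1n mul1n addnC expnD /c; lia.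
have hcx : forall k, k <= n.*2 -> c k < x.
  by move=> k hk; rewrite hx; apply: bin_lt => //; lia.
have hN : N < x ^ n.
  apply: sum_lt => j hj; apply: hcx; lia.
have hA : A < x ^ n by apply: sum_lt => j hj; apply: hcx; lia.
have hcn : (c n).+2 <= x by rewrite hx; apply: bin_lt2; lia.
have hcn0 : 0 < c n by rewrite /c bin_gt0; lia.
have hPl : x ^ n <= P by rewrite hP; nia.
have hPu : P < x ^ n.+1.
  rewrite hP expnS.
  have : (c n).+1 * x ^ n <= x * x ^ n by rewrite leq_mul2r; apply/orP; right; lia.
  nia.
have -> : (x + 1) ^ n.*2 %% (x ^ n.+1 + 1) = P - N.
  rewrite E.
  have -> : P + x ^ n.+1 * N = (P - N) + N * (x ^ n.+1 + 1).
    have : N <= P by lia.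
    nia.
  rewrite addnC modnMDl modn_small //; lia.
set d := x - 1.
have hxd : x %% d = 1 %% d.
  by rewrite {1}(_ : x = d + 1) ?modnDl // /d; lia.
have hS : \sum_(0 <= j < n) c (j + n.+1) = \sum_(0 <= j < n) c j.
  rewrite big_nat_rev /=; apply: eq_big_nat => j /andP[_ hj].
  rewrite /c -bin_sub; last by lia.
  congr 'C(_, _); lia.
have hmod : P - N = c n %[mod d].
  apply/eqP; rewrite -(eqn_modDr (\sum_(0 <= j < n) c j)).
  have -> : P - N + \sum_(0 <= j < n) c j = P - N + (N %% d) %[mod d].
    by rewrite -modnDmr -[in RHS]modnDmr modn_mod /N sum_mod // hS.
  rewrite modnDmr subnK; last by lia.
  rewrite hP -modnDml /A sum_mod // modnDml -modnDmr -modnMmr.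
  by rewrite -modnXm hxd modnXm exp1n modnMmr muln1 modnDmr addnC.
have hcd : c n < d by rewrite /d; clear -hcn; lia.
exact: (esym (etrans hmod (modn_small hcd))).
Qed.

Theorem theorem5p1 (n : nat) (hn : 0 < n) :
  'C(n.*2, n) = ((4 ^ n + 1) ^ (n.*2) %% (4 ^ (n * (n + 1)) + 1)) %% (4 ^ n - 1).
Proof.
have h4 : 4 ^ n = 2 ^ n.*2 by rewrite -muln2 mulnC expnM.
have -> : 4 ^ (n * (n + 1)) = (4 ^ n) ^ n.+1 by rewrite -expnM addn1.
exact: main_gen hn h4.
Qed.
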